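(* Let $M$ be a nonzero $\mathscr{D}(R,V)$-module. Either $\mathrm{Ann}_R(M) = (0)$ or $\mathrm{Ann}_R(M) = \pi^\ell R$ for some $\ell \geq 1$.
   Context: Let $(V, \pi V, k)$ be a DVR of mixed characteristic $(0,p)$ (i.e. $V$ has characteristic zero, maximal ideal generated by $\pi$, and residue field $k$ of characteristic $p>0$), and let $R$ be either $V[[x_1, \ldots, x_n]]$ or $V[x_1, \ldots, x_n]$ for some $n \geq 0$. $\mathscr{D}(R,V)$ denotes the ring of $V$-linear differential operators on $R$, and $\mathscr{D}(R,V)$-modules are left modules over it. *)

(* Defs.v *)
From HB Require Import structures.
From mathcomp Require Import all_boot all_order all_algebra.
From mathcomp Require Import mpoly.
Set Implicit Arguments. Unset Strict Implicit. Unset Printing Implicit Defensive.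
Import Order.TTheory GRing.Theory.
Local Open Scope ring_scope.

(* characteristic 0 and its residue field V/piV has characteristic p > 0   *)
(* (p prime, p = 0 in V/piV, i.e. pi divides p in V).                      *)
Definition is_DVR_unif (V : idomainType) (pi : V) : Prop :=
  [/\ pi != 0, pi \isn't a GRing.unit &
      forall a : V, a != 0 ->
        exists u : V, exists k : nat, u \is a GRing.unit /\ a = u * pi ^+ k].

Definition mixed_char (V : idomainType) (pi : V) (p : nat) : Prop :=
  [/\ (forall m : nat, (0 < m)%N -> (m%:R : V) != 0),
      prime p & exists c : V, (p%:R : V) = pi * c].

Section PowerSeries.
Variables (V : nzRingType) (n : nat).
Definition pseries := 'X_{1..n} -> V.
Definition ps_add (f g : pseries) : pseries := fun m => f m + g m.
Definition ps_opp (f : pseries) : pseries := fun m => - f m.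
Definition ps_zero : pseries := fun _ => 0.
Definition ps_scale (c : V) (f : pseries) : pseries := fun m => c * f m.
Definition ps_mul (f g : pseries) : pseries := fun m =>
  \sum_(d : 'X_{1..n < (mdeg m).+1} | lem (bmnm d) m)
     f (bmnm d) * g (mnm_sub m (bmnm d)).
End PowerSeries.

(* Grothendieck differential operators on a V-algebra R, D(R,V), as a       *)
Section DiffOps.
Variables (V : nzRingType) (R : Type) (addR : R -> R -> R) (oppR : R -> R)
  (mulR : R -> R -> R) (scaleR : V -> R -> R).

Definition Vlinear (phi : R -> R) : Prop :=
  (forall a b, phi (addR a b) = addR (phi a) (phi b)) /\
  (forall (c : V) a, phi (scaleR c a) = scaleR c (phi a)).

Fixpoint diffop_ord (k : nat) (phi : R -> R) : Prop :=
  match k with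
  | 0 => Vlinear phi /\ (forall r s, phi (mulR r s) = mulR r (phi s))
  | k'.+1 => Vlinear phi /\
      (forall r, diffop_ord k' (fun s => addR (phi (mulR r s)) (oppR (mulR r (phi s)))))
  end.

Definition diffop (phi : R -> R) : Prop := exists k, diffop_ord k phi.

Definition is_Dmodule (M : zmodType) (act : (R -> R) -> M -> M) : Prop :=
  [/\ forall phi psi m, diffop phi -> diffop psi ->
        act (fun s => addR (phi s) (psi s)) m = act phi m + act psi m,
      forall phi psi m, diffop phi -> diffop psi ->
        act (fun s => phi (psi s)) m = act phi (act psi m),
      forall m, act (fun s => s) m = m &
      forall phi m1 m2, diffop phi -> act phi (m1 + m2) = act phi m1 + act phi m2].

(* Ann_R(M), R acting on M through R = D^0 (multiplication operators). *)
Definition AnnR (M : zmodType) (act : (R -> R) -> M -> M) (r : R) : Prop :=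
  forall m : M, act (mulR r) m = 0.

Definition ann_zero_or_pi_power (zeroR : R) (pi : V)
  (M : zmodType) (act : (R -> R) -> M -> M) : Prop :=
  (forall r, AnnR act r <-> r = zeroR) \/
  (exists l : nat, (1 <= l)%N /\
     forall r, AnnR act r <-> exists s : R, r = scaleR (pi ^+ l) s).
End DiffOps.

(* Main.v *)
Require Import Defs.
From HB Require Import structures.
From mathcomp Require Import all_boot all_order all_algebra.
From mathcomp Require Import mpoly.
From mathcomp Require Import boolp.
From mathcomp Require Import zify.
Set Implicit Arguments. Unset Strict Implicit. Unset Printing Implicit Defensive.
Import Order.TTheory GRing.Theory.
Local Open Scope ring_scope.
Section Generic.
Variables (V : comNzRingType) (R : comAlgType V).

Local Notation dord := (@diffop_ord V R +%R -%R *%R *:%R).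
Local Notation dop := (@diffop V R +%R -%R *%R *:%R).

Lemma dord_Vlin k phi : dord k phi -> Vlinear +%R *:%R phi.
Proof. by case: k => [|k] []. Qed.

Lemma dord_add k phi psi : dord k phi -> dord k psi -> dord k (fun s => phi s + psi s).
Proof.
elim: k phi psi => [|k IH] phi psi /= [[a1 z1] h1] [[a2 z2] h2]; split.
- by split=> [a b|c a]; rewrite ?a1 ?a2 ?z1 ?z2 ?scalerDr // addrACA.
- by move=> r s; rewrite h1 h2 mulrDr.
- by split=> [a b|c a]; rewrite ?a1 ?a2 ?z1 ?z2 ?scalerDr // addrACA.
- move=> r; have := IH _ _ (h1 r) (h2 r).
  have -> // : (fun s => phi (r * s) + psi (r * s) + - (r * (phi s + psi s))) =
    (fun s => phi (r * s) + - (r * phi s) + (psi (r * s) + - (r * psi s))).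
  by apply: funext => s; rewrite mulrDr opprD addrACA.
Qed.

Lemma dord_mull k g phi : dord k phi -> dord k (fun s => g * phi s).
Proof.
elim: k g phi => [|k IH] g phi /= [[a1 z1] h1]; split.
- by split=> [a b|c a]; rewrite ?a1 ?z1 ?mulrDr ?scalerAr.
- by move=> r s; rewrite h1 mulrCA.
- by split=> [a b|c a]; rewrite ?a1 ?z1 ?mulrDr ?scalerAr.
- move=> r; have := IH g _ (h1 r).
  have -> // : (fun s => g * phi (r * s) + - (r * (g * phi s))) =
    (fun s => g * (phi (r * s) + - (r * phi s))).
  by apply: funext => s; rewrite mulrDr mulrCA mulrN.
Qed.

Lemma dord_zero k : dord k (fun _ => 0).
Proof.
have hl : Vlinear +%R *:%R (fun _ : R => 0 : R) by split=> *; rewrite ?addr0 ?scaler0.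
elim: k => [|k IH] /=; split => //; first by move=> *; rewrite mulr0.
by move=> r; have -> : (fun _ : R => 0 + - (r * 0)) = (fun _ => 0 : R)
  by apply: funext => s; rewrite mulr0 oppr0 addr0.
Qed.

Lemma dord_S k phi : dord k phi -> dord k.+1 phi.
Proof.
elim: k phi => [|k IH] phi.
  move=> [hl h]; split => // r.
  change (dord 0 (fun s => phi (r * s) + - (r * phi s))).
  have -> : (fun s => phi (r * s) + - (r * phi s)) = (fun _ => 0 : R).
    by apply: funext => s; rewrite h subrr.
  exact: (dord_zero 0).
move=> [hl h]; split => // r; apply: IH; exact: h.
Qed.

Lemma dord_le k k' phi : (k <= k')%N -> dord k phi -> dord k' phi.
Proof.
move=> /subnK <-; elim: (k' - k)%N => [|d IH] // h.
by rewrite addSn; apply: dord_S; apply: IH.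
Qed.

Lemma dop_add phi psi : dop phi -> dop psi -> dop (fun s => phi s + psi s).
Proof.
move=> [k1 h1] [k2 h2]; exists (maxn k1 k2).
by apply: dord_add; apply: dord_le h1 || apply: dord_le h2;
  rewrite ?leq_maxl ?leq_maxr.
Qed.

Lemma dord_sum k m (F : 'I_m -> R -> R) : (forall i, dord k (F i)) ->
  dord k (fun s => \sum_(i < m) F i s).
Proof.
elim: m F => [|m IH] F hF.
  have -> : (fun s => \sum_(i < 0) F i s) = (fun _ => 0 : R).
    by apply: funext => s; rewrite big_ord0.
  exact: dord_zero.
have -> : (fun s => \sum_(i < m.+1) F i s) =
   (fun s => (\sum_(i < m) F (widen_ord (leqnSn m) i) s) + F ord_max s).
  by apply: funext => s; rewrite big_ord_recr.
apply: dord_add; last exact: hF.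
by apply: (IH (fun i => F (widen_ord (leqnSn m) i))).
Qed.

Lemma dop_mul r : dord 0 ( *%R r).
Proof.
split; first by split=> [a b|c a]; rewrite ?mulrDr ?scalerAr.
by move=> a b; rewrite mulrCA.
Qed.

Lemma dop_id : dord 0 (fun s => s).
Proof. by split. Qed.

Definition leibniz (D : nat -> R -> R) :=
  [/\ forall s, D 0%N s = s,
      forall k, Vlinear +%R *:%R (D k) &
      forall k r s, D k (r * s) = \sum_(j < k.+1) D j r * D (k - j)%N s].

Lemma leibniz_dord D : leibniz D -> forall k, dord k (D k).
Proof.
move=> [h0 hl hL] k; elim/ltn_ind: k => -[|k] IH.
  have -> : D 0%N = (fun s => s) by apply: funext.
  exact: dop_id.
split; first exact: hl.
move=> r.
have -> : (fun s => D k.+1 (r * s) + - (r * D k.+1 s)) =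
   (fun s => \sum_(j < k.+1) D (bump 0 j) r * D (k - j)%N s).
  apply: funext => s; rewrite hL big_ord_recl /= h0 subn0 addrC addKr.
  by apply: eq_bigr => i _; rewrite subSS.
apply: dord_sum => i; apply: dord_mull; apply: (@dord_le (k - i)%N).
  exact: leq_subr.
by apply: IH; rewrite ltnS leq_subr.
Qed.

Variables (M : zmodType) (act : (R -> R) -> M -> M).
Hypothesis HM : is_Dmodule +%R -%R *%R *:%R act.

Definition inI (r : R) := AnnR *%R act r.

Lemma act_add phi psi m : dop phi -> dop psi ->
  act (fun s => phi s + psi s) m = act phi m + act psi m.
Proof. by case: HM => h _ _ _; apply: h. Qed.

Lemma act_comp phi psi m : dop phi -> dop psi ->
  act (fun s => phi (psi s)) m = act phi (act psi m).
Proof. by case: HM => _ h _ _; apply: h. Qed.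

Lemma act_id m : act (fun s => s) m = m.
Proof. by case: HM. Qed.

Lemma act_addm phi m1 m2 : dop phi -> act phi (m1 + m2) = act phi m1 + act phi m2.
Proof. by case: HM => _ _ _ h; apply: h. Qed.

Lemma act_m0 phi : dop phi -> act phi 0 = 0.
Proof.
move=> h; have := act_addm 0 0 h; rewrite addr0 => /eqP.
by rewrite -subr_eq0 opprD addrA subrr add0r oppr_eq0 => /eqP.
Qed.

Lemma act_zero m : act (fun _ => 0) m = 0.
Proof.
have h0 : dop (fun _ : R => 0) by exists 0%N; apply: dord_zero.
have := act_add m h0 h0.
have -> : (fun _ : R => 0 + 0) = (fun _ => 0 : R) by apply: funext => s; rewrite addr0.
move=> /eqP; by rewrite -subr_eq0 opprD addrA subrr add0r oppr_eq0 => /eqP.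
Qed.

Lemma inI0 : inI 0.
Proof.
move=> m; have -> : *%R (0 : R) = (fun _ => 0 : R) by apply: funext => s; rewrite mul0r.
exact: act_zero.
Qed.

Lemma inIM r s : inI r -> inI (r * s).
Proof.
move=> h m.
have -> : *%R (r * s) = (fun t => r * (s * t)) by apply: funext => t; rewrite mulrA.
rewrite act_comp; try by exists 0%N; apply: dop_mul.
exact: h.
Qed.

Lemma inIMl r s : inI r -> inI (s * r).
Proof. by rewrite mulrC; apply: inIM. Qed.

Lemma inID r s : inI r -> inI s -> inI (r + s).
Proof.
move=> h1 h2 m.
have -> : *%R (r + s) = (fun t => r * t + s * t) by apply: funext => t; rewrite mulrDl.
by rewrite act_add ?h1 ?h2 ?addr0 //; exists 0%N; apply: dop_mul.
Qed.

Lemma inIN r : inI r -> inI (- r).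
Proof. by move=> h; rewrite -mulN1r; apply: inIMl. Qed.

Lemma inIB r s : inI r -> inI s -> inI (r - s).
Proof. by move=> h1 h2; apply: inID => //; apply: inIN. Qed.

Lemma inIZ c r : inI r -> inI (c *: r).
Proof. by move=> h; rewrite -[r]mul1r scalerAl; apply: inIMl. Qed.

Lemma inI_sum m (F : 'I_m -> R) : (forall i, inI (F i)) -> inI (\sum_(i < m) F i).
Proof.
elim: m F => [|m IH] F hF; first by rewrite big_ord0; apply: inI0.
by rewrite big_ord_recr; apply: inID => //; apply: IH.
Qed.

Lemma act_sum k (F : 'I_k -> R -> R) m : (forall i, dop (F i)) ->
  act (fun s => \sum_(i < k) F i s) m = \sum_(i < k) act (F i) m.
Proof.
elim: k F => [|k IH] F hF.
  have -> : (fun s => \sum_(i < 0) F i s) = (fun _ => 0 : R).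
    by apply: funext => s; rewrite big_ord0.
  by rewrite act_zero big_ord0.
have -> : (fun s => \sum_(i < k.+1) F i s) =
   (fun s => (\sum_(i < k) F (widen_ord (leqnSn k) i) s) + F ord_max s).
  by apply: funext => s; rewrite big_ord_recr.
have hs : forall k' (G : 'I_k' -> R -> R), (forall i, dop (G i)) ->
     dop (fun s => \sum_(i < k') G i s).
  move=> k' G hG; elim: k' G hG => [|k' IH'] G hG.
    have -> : (fun s => \sum_(i < 0) G i s) = (fun _ => 0 : R).
      by apply: funext => s; rewrite big_ord0.
    by exists 0%N; apply: dord_zero.
  have -> : (fun s => \sum_(i < k'.+1) G i s) =
     (fun s => (\sum_(i < k') G (widen_ord (leqnSn k') i) s) + G ord_max s).
    by apply: funext => s; rewrite big_ord_recr.
  by apply: dop_add => //; apply: IH'.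
rewrite act_add //; last by apply: hs.
by rewrite IH // big_ord_recr.
Qed.

Lemma inI_leibniz D : leibniz D -> forall k r, inI r -> inI (D k r).
Proof.
move=> hD; have [h0 hl hL] := hD.
move=> k r hr; elim/ltn_ind: k => k IH m.
have dD : forall j, dop (D j) by move=> j; exists j; apply: leibniz_dord.
have dM : forall g, dop ( *%R g) by move=> g; exists 0%N; apply: dop_mul.
have := act_comp m (dD k) (dM r).
rewrite hr act_m0 //.
have -> : (fun s => D k (r * s)) =
   (fun s => \sum_(j < k.+1) (fun t => D j r * D (k - j)%N t) s).
  by apply: funext => s; rewrite hL.
rewrite act_sum; last first.
  move=> i; have [kk hk] := dD (k - i)%N; exists kk; exact: dord_mull.
rewrite big_ord_recr /= subnn big1 ?add0r.
  have -> : (fun t => D k r * D 0%N t) = *%R (D k r) by apply: funext => t; rewrite h0.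
  by [].
move=> i _.
rewrite (act_comp m (dM (D i r)) (dD (k - i)%N)).
by apply: IH.
Qed.

End Generic.
Section Final.
Variables (V : comNzRingType) (R : comAlgType V).
Variables (M : zmodType) (act : (R -> R) -> M -> M).
Hypothesis HM : is_Dmodule +%R -%R *%R *:%R act.

Lemma final_B (pi : V) : (exists m : M, m != 0) ->
  (forall r, inI act r -> r != 0 ->
     exists v, inI act (pi ^+ v *: 1) /\ exists s, r = pi ^+ v *: s) ->
  ann_zero_or_pi_power *%R *:%R 0 pi act.
Proof.
move=> [m0 hm0] HP.
have [ex|nex] := pselect (exists r, inI act r /\ r != 0); last first.
  left => r; split; last by move=> ->; apply: inI0.
  move=> hr; apply/eqP; have [//|hr0] := eqVneq r 0.
  by exfalso; apply: nex; exists r.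
right.
have exv : exists v, `[< inI act (pi ^+ v *: 1) >].
  case: ex => r [hr hr0]; have [v [hv _]] := HP r hr hr0.
  by exists v; apply/asboolP.
pose l := ex_minn exv.
have [hl lmin] : inI act (pi ^+ l *: 1) /\ forall v, inI act (pi ^+ v *: 1) -> (l <= v)%N.
  rewrite /l; case: ex_minnP => l' /asboolP h1 h2; split => // v hv.
  by apply: h2; apply/asboolP.
exists l; split.
  rewrite lt0n; apply/eqP => l0; move: hl; rewrite l0 expr0 scale1r => h1.
  move: hm0; have := h1 m0.
  have -> : *%R (1 : R) = (fun s => s) by apply: funext => s; rewrite mul1r.
  by rewrite act_id // => ->; rewrite eqxx.
move=> r; split.
  move=> hr; have [->|hr0] := eqVneq r 0; first by exists 0; rewrite scaler0.
  have [v [hv [s ->]]] := HP r hr hr0.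
  have hlv := lmin v hv.
  exists (pi ^+ (v - l) *: s); rewrite scalerA -exprD subnKC //.
move=> [s ->]; rewrite -[s]mul1r scalerAl; apply: inIM => //.
Qed.
End Final.
Section PolyD.
Variables (V : comNzRingType) (n : nat).
Local Notation MP := {mpoly V[n]}.

Definition hT (i : 'I_n) (j : 'I_n) : {poly MP} := ('X_j)%:P + (j == i)%:R * 'X.
Definition Tay (i : 'I_n) (f : MP) : {poly MP} := mmap (polyC \o (@mpolyC n V)) (hT i) f.
Definition Dp (i : 'I_n) (k : nat) (f : MP) : MP := (Tay i f)`_k.

Lemma Dp_add i k : {morph Dp i k : a b / a + b}.
Proof. by move=> a b; rewrite /Dp /Tay mmapD coefD. Qed.

Lemma Dp_scale i k c f : Dp i k (c *: f) = c *: Dp i k f.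
Proof. by rewrite /Dp /Tay mmapZ /= coefCM mul_mpolyC. Qed.

Lemma Dp_mul i k r s : Dp i k (r * s) = \sum_(j < k.+1) Dp i j r * Dp i (k - j)%N s.
Proof. by rewrite /Dp /Tay rmorphM coefM. Qed.

Lemma coef_CaddX (c : MP) a k : ((c%:P + 'X) ^+ a)`_k = c ^+ (a - k) *+ 'C(a, k).
Proof.
have e : forall j, c%:P ^+ j = (c ^+ j)%:P by move=> j; rewrite rmorphXn.
rewrite exprDn coef_sum.
under eq_bigr => j _ do rewrite coefMn e coefCM coefXn.
case: (ltnP k a.+1) => hk.
  rewrite (bigD1 (Ordinal hk)) //= eqxx mulr1 big1 ?addr0 //.
  move=> j /eqP hj.
  have -> : (k == j) = false by apply/eqP => ee; apply: hj; apply: val_inj.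
  by rewrite mulr0 mul0rn.
rewrite bin_small // mulr0n big1 // => j _.
have -> : (k == j) = false by apply/negbTE; rewrite neq_ltn (leq_trans (ltn_ord j)) ?orbT.
by rewrite mulr0 mul0rn.
Qed.

Lemma Dp_X i k m : Dp i k 'X_[m] = 'X_[(m - U_(i) *+ k)%MM] *+ 'C(m i, k).
Proof.
rewrite /Dp /Tay mmapX /mmap1 (bigD1 i) //= /hT eqxx mul1r.
have -> : \prod_(j < n | j != i) (('X_j)%:P + (j == i)%:R * 'X) ^+ m j =
   (\prod_(j < n | j != i) 'X_j ^+ m j : MP)%:P.
  rewrite rmorph_prod; apply: eq_bigr => j /negbTE ->.
  by rewrite mul0r addr0 rmorphXn.
rewrite coefMC coef_CaddX [in RHS]mpolyXE_id [in RHS](bigD1 i) //= mulrnAl.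
congr (_ *+ _); congr (_ * _).
  by rewrite mnmBE mulmnE mnm1E eqxx ?muln1 ?mul1n.
apply: eq_bigr => j hj; rewrite mnmBE mulmnE mnm1E.
by rewrite eq_sym (negbTE hj) ?muln0 ?mul0n subn0.
Qed.

Lemma Dp_coefX i k m d :
  (Dp i k 'X_[m])@_d = (('X_[m])@_(d + U_(i) *+ k)%MM) *+ 'C(d i + k, k).
Proof.
rewrite Dp_X mcoeffMn !mcoeffX.
case: (leqP k (m i)) => hk.
  have e : (m - U_(i) *+ k == d)%MM = (m == d + U_(i) *+ k)%MM.
    apply/eqP/eqP => [<-|->].
      apply/mnmP => j; rewrite mnmDE mnmBE mulmnE mnm1E.
      by case: (i =P j) => [<-|_] /=; rewrite ?mul1n ?mul0n ?subn0 ?addn0 ?subnK.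
    by rewrite addmK.
  rewrite e; case: eqP => [->|_]; last by rewrite !mul0rn.
  by rewrite mnmDE mulmnE mnm1E eqxx ?muln1 ?mul1n.
rewrite bin_small // mulr0n.
case: eqP => [e|_]; last by rewrite mul0rn.
by move: hk; rewrite e mnmDE mulmnE mnm1E eqxx ?muln1 ?mul1n ltnNge leq_addl.
Qed.

Lemma mpoly_ext_lin (W : zmodType) (F G : MP -> W) :
  (forall a b, F (a + b) = F a + F b) -> (forall a b, G (a + b) = G a + G b) ->
  (forall c m, F (c *: 'X_[m]) = G (c *: 'X_[m])) -> forall p, F p = G p.
Proof.
move=> hF hG hX p; rewrite (mpolyE p).
have F0 : F 0 = 0 by have := hF 0 0; rewrite addr0 => /eqP; rewrite -subr_eq0 opprD addrA subrr add0r oppr_eq0 => /eqP.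
have G0 : G 0 = 0 by have := hG 0 0; rewrite addr0 => /eqP; rewrite -subr_eq0 opprD addrA subrr add0r oppr_eq0 => /eqP.
elim: (msupp p) => [|m s IH]; first by rewrite !big_nil F0 G0.
by rewrite !big_cons hF hG IH hX.
Qed.

Lemma Dp_coef i k f d :
  (Dp i k f)@_d = (f@_(d + U_(i) *+ k)%MM) *+ 'C(d i + k, k).
Proof.
apply: (mpoly_ext_lin (F := fun f => (Dp i k f)@_d)
   (G := fun f => (f@_(d + U_(i) *+ k)%MM) *+ 'C(d i + k, k))).
- by move=> a b; rewrite Dp_add mcoeffD.
- by move=> a b; rewrite mcoeffD mulrnDl.
- by move=> c m; rewrite Dp_scale !mcoeffZ Dp_coefX mulrnAr.
Qed.

Lemma Dp0 i f : Dp i 0 f = f.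
Proof.
by apply/mpolyP => d; rewrite Dp_coef mulm0n addm0 addn0 bin0.
Qed.

Lemma Dp_leibniz i : leibniz (fun k => Dp i k).
Proof.
split.
- exact: Dp0.
- by move=> k; split; [apply: Dp_add | apply: Dp_scale].
- by move=> k r s; apply: Dp_mul.
Qed.

End PolyD.
Section MinVal.
Variables (V : idomainType) (pi : V).
Hypothesis hDVR : is_DVR_unif pi.

Lemma min_val (T : Type) (c : T -> V) t1 : c t1 != 0 ->
  exists v, (exists t0 u, u \is a GRing.unit /\ c t0 = u * pi ^+ v) /\
    exists w : T -> V, forall t, c t = pi ^+ v * w t.
Proof.
move=> h1; case: hDVR => pi0 piU hD.
have ex : exists k, `[< exists t u, u \is a GRing.unit /\ c t = u * pi ^+ k >].
  have [u [k [hu e]]] := hD _ h1; exists k; apply/asboolP; by exists t1, u.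
case: (ex_minnP ex) => v /asboolP hv vmin.
exists v; split => //.
have : forall t, exists w, c t = pi ^+ v * w.
  move=> t; have [->|ht] := eqVneq (c t) 0; first by exists 0; rewrite mulr0.
  have [u [k [hu e]]] := hD _ ht.
  have kv : (v <= k)%N by apply: vmin; apply/asboolP; exists t, u.
  by exists (u * pi ^+ (k - v)); rewrite e mulrCA -exprD subnKC.
by move=> /choice [w hw]; exists w.
Qed.
End MinVal.

Section PolyCase.
Variables (V : idomainType) (pi : V) (n : nat).
Hypothesis hDVR : is_DVR_unif pi.
Local Notation MP := {mpoly V[n]}.
Variables (M : zmodType) (act : (MP -> MP) -> M -> M).
Hypothesis HM : is_Dmodule +%R -%R *%R *:%R act.
Local Notation I := (inI act).

Definition Dall (s : seq 'I_n) (b : 'X_{1..n}) (r : MP) : MP :=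
  foldr (fun i f => Dp i (b i) f) r s.
Definition shft (s : seq 'I_n) (b : 'X_{1..n}) : 'X_{1..n} :=
  foldr (fun i m => (U_(i) *+ b i + m)%MM) 0%MM s.

Lemma Dall_I (s : seq 'I_n) (b : 'X_{1..n}) (r : MP) : I r -> I (Dall s b r).
Proof.
elim: s => [|i s IH] //= hr.
exact: (inI_leibniz HM (Dp_leibniz _ i) (b i) (IH hr)).
Qed.

Lemma Dall_coef (s : seq 'I_n) (b : 'X_{1..n}) (r : MP) (m : 'X_{1..n}) : exists N, (Dall s b r)@_m = r@_(m + shft s b)%MM *+ N.
Proof.
elim: s m => [|i s IH] m /=; first by exists 1%N; rewrite addm0.
rewrite Dp_coef; have [N ->] := IH (m + U_(i) *+ b i)%MM.
by exists (N * 'C(m i + b i, b i))%N; rewrite -mulrnA addmA.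
Qed.

Lemma Dall_coef1 (s : seq 'I_n) (b : 'X_{1..n}) (r : MP) (m : 'X_{1..n}) : uniq s -> (forall i, i \in s -> m i = 0%N) ->
  (Dall s b r)@_m = r@_(m + shft s b)%MM.
Proof.
elim: s m => [|i s IH] m /=; first by rewrite addm0.
move=> /andP [ni us] hm.
rewrite Dp_coef IH //; last first.
  move=> j hj; rewrite mnmDE mulmnE mnm1E hm ?inE ?hj ?orbT //.
  by have -> : (i == j) = false by apply/negbTE; apply: contraNneq ni => ->.
by rewrite hm ?inE ?eqxx // add0n binn mulr1n addmA.
Qed.

Lemma shft_enum (b : 'X_{1..n}) : shft (enum 'I_n) b = b.
Proof.
apply/mnmP => j.
have : forall s : seq 'I_n, uniq s -> (shft s b) j = if j \in s then b j else 0%N.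
  elim => [|i s IH]; first by rewrite /= mnm0E.
  move=> /= /andP [ni us].
  rewrite mnmDE mulmnE mnm1E IH // inE.
  case: (i =P j) => [<-|/eqP nij] /=.
    by rewrite eqxx (negbTE ni) mul1n addn0.
  by rewrite eq_sym (negbTE nij) mul0n.
by move=> /(_ _ (enum_uniq 'I_n)) ->; rewrite mem_enum.
Qed.

Definition Db b r := Dall (enum 'I_n) b r.

Lemma Db_coef0 (b : 'X_{1..n}) (r : MP) : (Db b r)@_0 = r@_b.
Proof.
rewrite /Db Dall_coef1; first by rewrite shft_enum add0m.
  exact: enum_uniq.
by move=> i _; rewrite mnm0E.
Qed.

Lemma Db_coef (b : 'X_{1..n}) (r : MP) (m : 'X_{1..n}) : exists N, (Db b r)@_m = r@_(m + b)%MM *+ N.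
Proof. by have [N h] := Dall_coef (enum 'I_n) b r m; exists N; rewrite h shft_enum. Qed.

Lemma I_of_coefs (q : MP) : (forall m, I (q@_m *: 1)) -> I q.
Proof.
move=> h; rewrite (mpolyE q); elim: (msupp q) => [|m s IH].
  by rewrite big_nil; apply: inI0.
rewrite big_cons; apply: inID => //.
by rewrite -['X_[m]]mul1r scalerAl; apply: inIM.
Qed.

Lemma poly_coefs_I (r : MP) : I r -> forall b, I (r@_b *: 1).
Proof.
move=> hr.
suff : forall t b, (msize r <= mdeg b + t)%N -> I (r@_b *: 1).
  by move=> h b; apply: (h (msize r)); rewrite leq_addl.
elim => [|t IH] b hb.
  rewrite addn0 in hb; rewrite memN_msupp_eq0 ?scale0r; first exact: inI0.
  exact: msize_mdeg_ge.
have hq : forall m, I (((Db b r) - (r@_b *: 1))@_m *: 1).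
  move=> m; rewrite mcoeffB mcoeffZ mcoeff1.
  have [->|m0] := eqVneq m 0%MM.
    by rewrite Db_coef0 mulr1 subrr scale0r; apply: inI0.
  rewrite mulr0 subr0; have [N ->] := Db_coef b r m.
  rewrite -scalerMnl -mulr_natr; apply: inIM => //.
  apply: IH; apply: (leq_trans hb); rewrite mdegD addnS -addnA -add1n leq_add2r.
  by rewrite lt0n mdeg_eq0.
have := inIB HM (Dall_I (enum 'I_n) b hr) (I_of_coefs hq).
by rewrite opprB addrC subrK.
Qed.

Lemma poly_HP (r : MP) : I r -> r != 0 ->
  exists v, I (pi ^+ v *: 1) /\ exists s, r = pi ^+ v *: s.
Proof.
move=> hr r0.
have [b1 hb1] : exists b, r@_b != 0.
  case e: (msupp r) => [|b s]; first by move: r0; rewrite -msupp_eq0 e.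
  by exists b; rewrite -mcoeff_msupp e inE eqxx.
have [v [[t0 [u [hu e0]]] [w hw]]] := min_val hDVR (c := fun b => r@_b) hb1.
exists v; split.
  have := inIZ HM (u^-1) (poly_coefs_I hr t0).
  by rewrite scalerA e0 mulrA mulVr ?mul1r.
exists (\sum_(b <- msupp r) w b *: 'X_[b]).
rewrite {1}(mpolyE r) scaler_sumr; apply: eq_bigr => b _.
by rewrite scalerA -hw.
Qed.

Lemma poly_case : (exists m : M, m != 0) -> ann_zero_or_pi_power *%R *:%R 0 pi act.
Proof. by move=> hm; apply: final_B => //; apply: poly_HP. Qed.
End PolyCase.
Lemma mdeg_le (n : nat) (d m : 'X_{1..n}) : (d <= m)%MM -> (mdeg d <= mdeg m)%N.
Proof. by move=> h; rewrite -(submK h) mdegD leq_addl. Qed.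

Section SeriesRing.
Variables (V : comNzRingType) (n : nat).
Local Notation MP := {mpoly V[n]}.
Local Notation PS := (pseries V n).

Definition agree (m : 'X_{1..n}) (f : PS) (P : MP) := forall d, (d <= m)%MM -> f d = P@_d.

Lemma agree_le m m' f P : (m' <= m)%MM -> agree m f P -> agree m' f P.
Proof. by move=> h1 h2 d hd; apply: h2; apply: lepm_trans hd h1. Qed.

Lemma ps_mul_agree m f g P Q : agree m f P -> agree m g Q -> ps_mul f g m = (P * Q)@_m.
Proof.
move=> hf hg; rewrite /ps_mul (mcoeff_poly_mul_lin _ _ (k := (mdeg m).+1)) //.
apply: eq_bigr => d hd; rewrite hf // hg //; exact: lem_subr.
Qed.

Lemma agree_mul m f g P Q : agree m f P -> agree m g Q -> agree m (ps_mul f g) (P * Q).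
Proof.
move=> hf hg d hd; apply: ps_mul_agree; [exact: agree_le hf | exact: agree_le hg].
Qed.

Lemma agree_add m f g P Q : agree m f P -> agree m g Q -> agree m (ps_add f g) (P + Q).
Proof. by move=> hf hg d hd; rewrite /ps_add mcoeffD hf ?hg. Qed.

Lemma agree_opp m f P : agree m f P -> agree m (ps_opp f) (- P).
Proof. by move=> hf d hd; rewrite /ps_opp mcoeffN hf. Qed.

Lemma agree_scale m c f P : agree m f P -> agree m (ps_scale c f) (c *: P).
Proof. by move=> hf d hd; rewrite /ps_scale mcoeffZ hf. Qed.

Definition tr (b : nat) (f : PS) : MP := \sum_(d : 'X_{1..n < b}) f d *: 'X_[d].

Lemma tr_coef b f d : (mdeg d < b)%N -> (tr b f)@_d = f d.
Proof.
move=> hd; rewrite /tr raddf_sum /=.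
rewrite (bigD1 (BMultinom hd)) //= mcoeffZ mcoeffX eqxx mulr1 big1 ?addr0 //.
move=> e he; rewrite mcoeffZ mcoeffX.
have -> : (bmnm e == d) = false.
  by apply/negbTE; apply: contra he => /eqP h; apply/eqP; apply: val_inj.
by rewrite mulr0.
Qed.

Lemma agree_tr m f : agree m f (tr (mdeg m).+1 f).
Proof. by move=> d hd; rewrite tr_coef // ltnS mdeg_le. Qed.
Arguments agree_tr : clear implicits.
Arguments agree_tr m f : clear implicits.

Definition ps_one : PS := fun m => (m == 0%MM)%:R.

Lemma agree_one m : agree m ps_one 1.
Proof. by move=> d _; rewrite mcoeff1. Qed.
Arguments agree_one m : clear implicits.

Lemma ps_ext (f g : PS) : (forall m, f m = g m) -> f = g.
Proof. by move=> h; apply: funext. Qed.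

Lemma ps_mulC : commutative (@ps_mul V n).
Proof.
move=> f g; apply: ps_ext => m.
by rewrite !(ps_mul_agree (agree_tr m _) (agree_tr m _)) mulrC.
Qed.

Lemma ps_mulA : associative (@ps_mul V n).
Proof.
move=> f g h; apply: ps_ext => m.
rewrite (ps_mul_agree (agree_tr m f) (agree_mul (agree_tr m g) (agree_tr m h))).
rewrite (ps_mul_agree (agree_mul (agree_tr m f) (agree_tr m g)) (agree_tr m h)).
by rewrite mulrA.
Qed.

Lemma ps_mul1 : left_id ps_one (@ps_mul V n).
Proof.
move=> f; apply: ps_ext => m.
by rewrite (ps_mul_agree (agree_one m) (agree_tr m f)) mul1r tr_coef.
Qed.

Lemma ps_mulDl : left_distributive (@ps_mul V n) (@ps_add V n).
Proof.
move=> f g h; apply: ps_ext => m.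
rewrite (ps_mul_agree (agree_add (agree_tr m f) (agree_tr m g)) (agree_tr m h)).
rewrite /ps_add (ps_mul_agree (agree_tr m f) (agree_tr m h)).
by rewrite (ps_mul_agree (agree_tr m g) (agree_tr m h)) mulrDl mcoeffD.
Qed.

Lemma ps_one_neq0 : ps_one != @ps_zero V n.
Proof.
apply/eqP => /(congr1 (fun f => f 0%MM)); rewrite /ps_one /ps_zero eqxx => /eqP.
by rewrite oner_eq0.
Qed.

Lemma ps_addA : associative (@ps_add V n).
Proof. by move=> f g h; apply: ps_ext => m; rewrite /ps_add addrA. Qed.
Lemma ps_addC : commutative (@ps_add V n).
Proof. by move=> f g; apply: ps_ext => m; rewrite /ps_add addrC. Qed.
Lemma ps_add0 : left_id (@ps_zero V n) (@ps_add V n).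
Proof. by move=> f; apply: ps_ext => m; rewrite /ps_add /ps_zero add0r. Qed.
Lemma ps_addN : left_inverse (@ps_zero V n) (@ps_opp V n) (@ps_add V n).
Proof. by move=> f; apply: ps_ext => m; rewrite /ps_add /ps_opp /ps_zero addNr. Qed.

HB.instance Definition _ := Choice.copy PS ('X_{1..n} -> V).
HB.instance Definition _ := GRing.isZmodule.Build PS ps_addA ps_addC ps_add0 ps_addN.
HB.instance Definition _ := GRing.Zmodule_isComNzRing.Build PS
  ps_mulA ps_mulC ps_mul1 ps_mulDl ps_one_neq0.

Lemma ps_scaleA a b (f : PS) : ps_scale a (ps_scale b f) = ps_scale (a * b) f.
Proof. by apply: ps_ext => m; rewrite /ps_scale mulrA. Qed.
Lemma ps_scale1 : left_id 1 (@ps_scale V n).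
Proof. by move=> f; apply: ps_ext => m; rewrite /ps_scale mul1r. Qed.
Lemma ps_scaleDr : right_distributive (@ps_scale V n) (@ps_add V n).
Proof. by move=> a f g; apply: ps_ext => m; rewrite /ps_scale /ps_add mulrDr. Qed.
Lemma ps_scaleDl (f : PS) : {morph (@ps_scale V n)^~ f : a b / a + b >-> ps_add a b}.
Proof. by move=> a b; apply: ps_ext => m; rewrite /ps_scale /ps_add mulrDl. Qed.

HB.instance Definition _ := GRing.Zmodule_isLmodule.Build V PS
  ps_scaleA ps_scale1 ps_scaleDr ps_scaleDl.

Lemma ps_scaleAl a (f g : PS) : ps_scale a (ps_mul f g) = ps_mul (ps_scale a f) g.
Proof.
apply: ps_ext => m.
rewrite (ps_mul_agree (agree_scale a (agree_tr m f)) (agree_tr m g)).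
by rewrite /ps_scale (ps_mul_agree (agree_tr m f) (agree_tr m g)) -scalerAl mcoeffZ.
Qed.

HB.instance Definition _ := GRing.Lmodule_isLalgebra.Build V PS ps_scaleAl.
HB.instance Definition _ := GRing.Lalgebra_isComAlgebra.Build V PS.

End SeriesRing.
Arguments agree_tr {V n} m f.
Arguments agree_one {V n} m.
Section SeriesD.
Variables (V : comNzRingType) (n : nat).
Local Notation MP := {mpoly V[n]}.
Local Notation PS := (pseries V n).

Definition Ds (i : 'I_n) (k : nat) (f : PS) : PS :=
  fun m => f (m + U_(i) *+ k)%MM *+ 'C(m i + k, k).

Lemma ps_sum_eval K (F : 'I_K -> PS) m : (\sum_(j < K) F j) m = \sum_(j < K) F j m.
Proof.
by apply: (big_rec2 (fun (x : PS) (y : V) => x m = y)) => // j x y _ <-.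
Qed.

Lemma lem_addU (m d : 'X_{1..n}) (i : 'I_n) j k : (d <= m)%MM -> (j <= k)%N ->
  (d + U_(i) *+ j <= m + U_(i) *+ k)%MM.
Proof.
move=> /mnm_lepP h hjk; apply/mnm_lepP => l; rewrite !mnmDE !mulmnE mnm1E.
by apply: leq_add; [apply: h | case: (i == l); rewrite ?mul1n ?mul0n].
Qed.

Lemma agree_Ds i k m f P : agree (m + U_(i) *+ k)%MM f P -> agree m (Ds i k f) (Dp i k P).
Proof.
move=> h d hd; rewrite /Ds Dp_coef h //; exact: lem_addU.
Qed.

Lemma Ds_mul i k (f g : PS) :
  Ds i k (f * g) = \sum_(j < k.+1) Ds i j f * Ds i (k - j)%N g.
Proof.
apply: ps_ext => m; rewrite ps_sum_eval.
set m' := (m + U_(i) *+ k)%MM.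
have hf := agree_tr m' f; have hg := agree_tr m' g.
rewrite /Ds.
change ((ps_mul f g) m' *+ 'C(m i + k, k) =
  \sum_(j < k.+1) ps_mul (Ds i j f) (Ds i (k - j)%N g) m).
rewrite (ps_mul_agree hf hg) -Dp_coef Dp_mul raddf_sum /=.
apply: eq_bigr => j _.
rewrite (ps_mul_agree (m := m) (P := Dp i j (tr (mdeg m').+1 f))
                   (Q := Dp i (k - j)%N (tr (mdeg m').+1 g))) //.
  by apply: agree_Ds; apply: agree_le hf; apply: lem_addU; rewrite ?lepm_refl // -ltnS.
by apply: agree_Ds; apply: agree_le hg; apply: lem_addU; rewrite ?lepm_refl ?leq_subr.
Qed.

Lemma Ds0 i (f : PS) : Ds i 0 f = f.
Proof. by apply: ps_ext => m; rewrite /Ds mulm0n addm0 addn0 bin0 mulr1n. Qed.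

Lemma Ds_leibniz i : leibniz (fun k => Ds i k).
Proof.
split.
- exact: Ds0.
- move=> k; split=> [a b|c a]; apply: ps_ext => m; rewrite /Ds.
    by rewrite /= /ps_add mulrnDl.
  exact: esym (mulrnAr _ _ _).
- by move=> k r s; apply: Ds_mul.
Qed.

Definition DallS (s : seq 'I_n) (b : 'X_{1..n}) (r : PS) : PS :=
  foldr (fun i f => Ds i (b i) f) r s.

Lemma DallS_coef1 (s : seq 'I_n) (b : 'X_{1..n}) (r : PS) (m : 'X_{1..n}) :
  uniq s -> (forall i, i \in s -> m i = 0%N) ->
  (DallS s b r) m = r (m + shft s b)%MM.
Proof.
elim: s m => [|i s IH] m /=; first by rewrite addm0.
move=> /andP [ni us] hm.
rewrite {1}/Ds IH //; last first.
  move=> j hj; rewrite mnmDE mulmnE mnm1E hm ?inE ?hj ?orbT //.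
  by have -> : (i == j) = false by apply/negbTE; apply: contraNneq ni => ->.
by rewrite hm ?inE ?eqxx // add0n binn mulr1n addmA.
Qed.

Lemma DbS0 (b : 'X_{1..n}) (r : PS) : (DallS (enum 'I_n) b r) 0%MM = r b.
Proof.
rewrite DallS_coef1; first by rewrite shft_enum add0m.
  exact: enum_uniq.
by move=> i _; rewrite mnm0E.
Qed.

Lemma DallS_scale s b c (r : PS) : DallS s b (c *: r) = c *: DallS s b r.
Proof.
elim: s => [|i s IH] //=; rewrite IH.
by apply: ps_ext => m; exact: esym (mulrnAr _ _ _).
Qed.

End SeriesD.
Section SeriesInv.
Variables (V : comUnitRingType) (n : nat).
Local Notation MP := {mpoly V[n]}.
Local Notation PS := (pseries V n).

Definition pagree (m : 'X_{1..n}) (P Q : MP) := forall d, (d <= m)%MM -> P@_d = Q@_d.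

Lemma pagree_mul m P P' Q Q' : pagree m P P' -> pagree m Q Q' -> pagree m (P * Q) (P' * Q').
Proof.
move=> hP hQ d hd.
rewrite (mcoeff_poly_mul_lin P Q (k := (mdeg d).+1)) //.
rewrite (mcoeff_poly_mul_lin P' Q' (k := (mdeg d).+1)) //.
apply: eq_bigr => e he; rewrite hP ?hQ //; first exact: lepm_trans (lem_subr _ _) hd.
exact: lepm_trans he hd.
Qed.

Lemma pagree_exp m P P' j : pagree m P P' -> pagree m (P ^+ j) (P' ^+ j).
Proof.
move=> h; elim: j => [|j IH]; first by move=> d _; rewrite !expr0.
by rewrite !exprS; apply: pagree_mul.
Qed.

Lemma pow_vanish (Q : MP) : Q@_0%MM = 0 -> forall j d, (mdeg d < j)%N -> (Q ^+ j)@_d = 0.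
Proof.
move=> h0; elim => [|j IH] d hd //.
rewrite exprS (mcoeff_poly_mul_lin Q (Q ^+ j) (k := (mdeg d).+1)) //.
rewrite big1 // => e he.
have [->|e0] := eqVneq (bmnm e) 0%MM; first by rewrite h0 mul0r.
rewrite IH ?mulr0 //.
move: (bmnm e) he e0 => e' he e0.
have H : mdeg d = (mdeg (d - e') + mdeg e')%N by rewrite -mdegD submK.
have : (0 < mdeg e')%N by rewrite lt0n mdeg_eq0.
move: hd; rewrite H; lia.
Qed.

Variable (w : PS).
Hypothesis hw0 : w 0%MM \is a GRing.unit.
Local Notation u := (w 0%MM).

Definition QK (K : nat) : MP := 1 - u^-1 *: tr K w.
Definition SK (K : nat) : MP := \sum_(j < K) QK K ^+ j.

Lemma QK0 K : (0 < K)%N -> (QK K)@_0%MM = 0.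
Proof.
move=> hK; rewrite /QK mcoeffB mcoeff1 eqxx mcoeffZ tr_coef ?mdeg0 //.
by rewrite mulVr // subrr.
Qed.

Lemma QK_agree K K' d : (mdeg d < K)%N -> (mdeg d < K')%N -> pagree d (QK K) (QK K').
Proof.
move=> h1 h2 e he; have hle := mdeg_le he.
rewrite /QK !mcoeffB !mcoeffZ !tr_coef //; exact: leq_ltn_trans hle _.
Qed.

Lemma SK_coef K d : (mdeg d < K)%N -> (SK K)@_d = (SK (mdeg d).+1)@_d.
Proof.
move=> hK; rewrite /SK !raddf_sum /= -!(big_mkord xpredT (fun j => (QK _ ^+ j)@_d)).
rewrite (big_cat_nat _ (n := (mdeg d).+1)) //= [X in _ + X]big1_seq ?addr0.
  apply: eq_bigr => j _; apply: pagree_exp; last exact: lepm_refl.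
  exact: QK_agree.
move=> j /andP [_]; rewrite mem_index_iota => /andP [hj _].
apply: pow_vanish.
  by apply: QK0; exact: leq_ltn_trans (leq0n _) hK.
exact: hj.
Qed.

Definition ps_inv : PS := fun d => u^-1 * (SK (mdeg d).+1)@_d.

Lemma ps_inv_agree m : agree m ps_inv (u^-1 *: SK (mdeg m).+1).
Proof.
move=> d hd; rewrite /ps_inv mcoeffZ (SK_coef (K := (mdeg m).+1)) //.
by rewrite ltnS mdeg_le.
Qed.

Lemma ps_invP : ps_inv * w = 1.
Proof.
apply: ps_ext => m.
change (ps_mul ps_inv w m = @ps_one V n m).
set K := (mdeg m).+1.
rewrite (ps_mul_agree (@ps_inv_agree m) (agree_tr m w)) -/K.
have -> : u^-1 *: SK K * tr K w = SK K * (1 - QK K).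
  by rewrite /QK opprB addrC subrK -scalerAl scalerAr.
have -> : SK K * (1 - QK K) = 1 - QK K ^+ K.
  by rewrite -[1 - QK K ^+ K]opprB subrX1 -mulNr (opprB (QK K)) mulrC.
rewrite mcoeffB mcoeff1 (pow_vanish (QK0 _)) ?subr0 //.
Qed.

End SeriesInv.
Section SeriesCase.
Variables (V : idomainType) (pi : V) (n : nat).
Hypothesis hDVR : is_DVR_unif pi.
Local Notation PS := (pseries V n).
Variables (M : zmodType) (act : (PS -> PS) -> M -> M).
Hypothesis HM : is_Dmodule +%R -%R *%R *:%R act.
Local Notation I := (inI act).

Lemma DallS_I (s : seq 'I_n) (b : 'X_{1..n}) (r : PS) : I r -> I (DallS s b r).
Proof.
elim: s => [|i s IH] //= hr.
exact: (inI_leibniz HM (Ds_leibniz _ i) (b i) (IH hr)).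
Qed.

Lemma series_HP (r : PS) : I r -> r != 0 ->
  exists v, I (pi ^+ v *: 1) /\ exists s, r = pi ^+ v *: s.
Proof.
move=> hr r0.
have [b1 hb1] : exists b, r b != 0.
  case: (pselect (exists b, r b != 0)) => // nex; exfalso; move/eqP: r0; apply.
  apply: ps_ext => m; apply/eqP; have [//|hm] := eqVneq (r m) 0.
  by exfalso; apply: nex; exists m.
have [v [[t0 [u [hu e0]]] [w' hw]]] := min_val hDVR (c := r) hb1.
pose w : PS := w'.
have hrw : r = pi ^+ v *: w by apply: ps_ext => m; rewrite hw.
have pv0 : pi ^+ v != 0 by case: hDVR => pi0 _ _; rewrite expf_neq0.
have wt0 : w t0 = u by apply: (mulfI pv0); rewrite -hw e0 mulrC.
set Dw := DallS (enum 'I_n) t0 w.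
have hD0 : Dw 0%MM \is a GRing.unit by rewrite /Dw DbS0 wt0.
have hinv := ps_invP hD0.
exists v; split; last by exists w.
have hDr := DallS_I (enum 'I_n) t0 hr.
rewrite hrw DallS_scale -/Dw in hDr.
by rewrite -hinv scalerAr; apply: inIMl.
Qed.

Lemma series_case : (exists m : M, m != 0) -> ann_zero_or_pi_power *%R *:%R 0 pi act.
Proof. by move=> hm; apply: final_B => //; apply: series_HP. Qed.
End SeriesCase.

Theorem theorem3p1 (V : idomainType) (pi : V) (p n : nat)
  (hDVR : is_DVR_unif pi) (hchar : mixed_char pi p) :
  (* R = V[x_1, ..., x_n] *)
  (forall (M : zmodType) (act : ({mpoly V[n]} -> {mpoly V[n]}) -> M -> M),
     is_Dmodule +%R -%R *%R *:%R act -> (exists m : M, m != 0) ->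
     ann_zero_or_pi_power *%R *:%R 0 pi act) /\
  (* R = V[[x_1, ..., x_n]] *)
  (forall (M : zmodType) (act : (pseries V n -> pseries V n) -> M -> M),
     is_Dmodule (@ps_add V n) (@ps_opp V n) (@ps_mul V n) (@ps_scale V n) act ->
     (exists m : M, m != 0) ->
     ann_zero_or_pi_power (@ps_mul V n) (@ps_scale V n)
       (@ps_zero V n) pi act).
Proof.
split.
  by move=> M act HM hm; exact: (poly_case hDVR HM hm).
move=> M act HM hm; exact: (series_case hDVR HM hm).
Qed.
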